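(* If $X$ and $Y$ are directed acyclic graphs with $|V(X)|=|V(Y)|=n$, then $\mathrm{DFS}(X,Y)$ is acyclic, i.e. it contains no directed cycle.
   Context: Directed graphs are finite and loopless but may have multiple edges. For distinct vertices $a,b$ of a directed graph $X$, $m_X(a,b)\ge 0$ denotes the number of edges from $a$ to $b$ in $X$. A directed graph is acyclic if it has no directed cycle. For directed graphs $X,Y$ with $|V(X)|=|V(Y)|$, the directed friends-and-seats graph $\mathrm{DFS}(X,Y)$ is defined as follows. Its vertices are the bijections $\sigma:V(X)\to V(Y)$. For every bijection $\sigma$ and every ordered pair $(a,b)$ of distinct vertices of $X$, it has exactly $m_X(a,b)\,m_Y(\sigma(a),\sigma(b))$ edges from $\sigma$ to $\sigma\circ(a\,b)$, where $(a\,b)$ is the transposition exchanging $a$ and $b$. It has no other edges. *)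

(* Defs.v *)
From mathcomp Require Import all_boot all_order all_fingroup.
Set Implicit Arguments. Unset Strict Implicit. Unset Printing Implicit Defensive.

(* A finite directed multigraph on vertex type T is given by its edge
   multiplicity function m : T -> T -> nat (m a b = number of edges a -> b). *)
Definition loopless (T : finType) (m : T -> T -> nat) : Prop :=
  forall a : T, m a a = 0.

Definition has_directed_cycle (T : finType) (m : T -> T -> nat) : Prop :=
  exists c : seq T, [&& c != [::], uniq c & path.cycle (fun x y => 0 < m x y) c].

Definition acyclic (T : finType) (m : T -> T -> nat) : Prop :=
  ~ has_directed_cycle m.

Definition is_bij (TX TY : finType) (f : {ffun TX -> TY}) : bool :=
  injectiveb f && [forall y, exists x, f x == y].

Definition bijs (TX TY : finType) := {f : {ffun TX -> TY} | is_bij f}.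

Definition swap_comp (TX TY : finType) (s : bijs TX TY) (a b : TX)
  : {ffun TX -> TY} := [ffun x => val s (tperm a b x)].

Definition DFS (TX TY : finType) (mX : TX -> TX -> nat) (mY : TY -> TY -> nat)
  (s t : bijs TX TY) : nat :=
  \sum_(a : TX) \sum_(b : TX | a != b)
     (if val t == swap_comp s a b then mX a b * mY (val s a) (val s b) else 0).

(* Main.v *)
Require Import Defs.
From mathcomp Require Import all_boot all_order all_fingroup.
From mathcomp Require Import zify.

Lemma rank_lt (T : finType) (e : rel T) :
  ~ (exists c : seq T, [&& c != [::], uniq c & path.cycle e c]) ->
  forall a b, e a b -> #|[pred y | connect e b y]| < #|[pred y | connect e a y]|.
Proof.
move=> nc a b eab; apply: proper_card; apply/properP; split.
  apply/subsetP=> y; rewrite !inE => hby.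
  exact: connect_trans (connect1 eab) hby.
exists a; first by rewrite inE connect0.
rewrite inE; apply/negP=> /connectP [p pp ea].
case: (shortenP pp) ea => p' pp' up' _ ea.
apply: nc; exists (b :: p'); rewrite up' /= rcons_path pp' /=.
by rewrite -ea eab.
Qed.

Lemma path_dec (T : eqType) (e : rel T) (f : T -> nat) :
  (forall x y, e x y -> f y < f x) ->
  forall s x, path e x s -> s != [::] -> f (last x s) < f x.
Proof.
move=> H; elim=> [|y s IH] x //= /andP [exy ps] _.
case: s IH ps => [|z s] IH ps; first exact: H.
apply: ltn_trans (H _ _ exy); exact: IH.
Qed.

Lemma no_cycle_pot (T : eqType) (e : rel T) (f : T -> nat) :
  (forall x y, e x y -> f y < f x) ->
  ~ (exists c : seq T, [&& c != [::], uniq c & path.cycle e c]).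
Proof.
move=> H [[|x s]] //= /andP [_ cyc].
have := @path_dec _ _ _ H _ _ cyc; rewrite last_rcons.
by case: s cyc => [|? ?] _ /(_ isT); rewrite ltnn.
Qed.

Lemma rearr (A B C D S : nat) : B < A -> D < C ->
  A * D + (B * C + S) < A * C + (B * D + S).
Proof. nia. Qed.

Theorem mainTheorem5 (TX TY : finType) (n : nat)
  (mX : TX -> TX -> nat) (mY : TY -> TY -> nat) :
  #|TX| = n -> #|TY| = n ->
  loopless mX -> loopless mY ->
  acyclic mX -> acyclic mY ->
  acyclic (DFS mX mY).
Proof.
move=> _ _ _ _ aX aY.
pose rX := fun x => #|[pred y | connect (fun x y => 0 < mX x y) x y]|.
pose rY := fun x => #|[pred y | connect (fun x y => 0 < mY x y) x y]|.
have hX : forall a b, 0 < mX a b -> rX b < rX a by exact: rank_lt aX.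
have hY : forall a b, 0 < mY a b -> rY b < rY a by exact: rank_lt aY.
pose Phi := fun s : bijs TX TY => \sum_x rX x * rY (val s x).
apply: (@no_cycle_pot _ _ Phi) => s t.
case: (boolP [exists a, exists b, [&& a != b, val t == swap_comp s a b &
            0 < mX a b * mY (val s a) (val s b)]]); last first.
  move=> /existsPn hn; rewrite /DFS big1 // => a _; apply: big1 => b ab.
  move: (hn a) => /existsPn /(_ b); rewrite ab /=.
  by case: (val t == _) => //= /negbTE; rewrite lt0n => /negbFE /eqP.
move=> /existsP [a /existsP [b /and3P [ab /eqP ht hm]]] _.
have hma : 0 < mX a b by move: hm; rewrite muln_gt0 => /andP [].
have hmb : 0 < mY (val s a) (val s b) by move: hm; rewrite muln_gt0 => /andP [].
have h1 := hX _ _ hma; have h2 := hY _ _ hmb.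
have ba : b != a by rewrite eq_sym.
have split2 : forall F : TX -> nat, \sum_x F x =
    F a + (F b + \sum_(i | (i != a) && (i != b)) F i).
  move=> F; rewrite (bigD1 a) //= (bigD1 b) //=.
  idtac.
rewrite /Phi /= (split2 (fun x => rX x * rY (val t x))).
rewrite (split2 (fun x => rX x * rY (val s x))).
have -> : \sum_(i | (i != a) && (i != b)) rX i * rY (val t i) =
          \sum_(i | (i != a) && (i != b)) rX i * rY (val s i).
  apply: eq_bigr => i /andP [ia ib]; rewrite ht /swap_comp ffunE tpermD //.
  by rewrite eq_sym. by rewrite eq_sym.
rewrite ht /swap_comp !ffunE tpermL tpermR.
set S := \sum_(i | _) _.
exact: rearr.
Qed.
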